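(* Let $G=(V,E)$ be an atomic bispanning graph, $v\in V$ of degree $3$ with neighbours $x,y,z$ and incident edges $e_x,e_y,e_z$, let $(a,b)\in\{(x,y),(x,z),(y,z)\}$, $c$ the remaining neighbour, and $G_{a,b}$ the reduction graph. If $(f,e_{a,b},S,T)$ is an arc of $\vec\tau_3(G_{a,b})$, then there exists $e_2\in\{e_a,e_b\}$ such that (i) $(f,e_2,\rho_{e_{a,b},c}(S,T))$ is an arc of $\vec\tau_3(G)$, and (ii) $(e_2,f,S',T')$ is an arc of $\vec\tau_3(G)$, where $(S',T')\in V_{\tau(G)}$ is the head of the arc in (i).
   Context: Graphs are finite, undirected, possibly with parallel edges, no loops; $X+a=X\cup\{a\}$, $X-a=X\setminus\{a\}$. A spanning tree is $T\subseteq E$ with $(V,T)$ connected and acyclic; bispanning means $E$ is the union of two disjoint spanning trees; atomic means the only bispanning subgraphs are the graph itself and single vertices. For a spanning tree $T$ of a graph $H$ and $e\notin T$, $C_H(T,e)$ is the edge set of the unique cycle in $T+e$; for $e\in T$, $D_H(T,e)$ is the set of edges of $H$ with one end in each component of $(V(H),T-e)$. For disjoint spanning trees $S,T$ covering all edges of $H$: $(e,f)$ with $e\in S,f\in T$ and $D_H(S,e)\cap C_H(T,e)=\{e,f\}$ is a unique $S$ edge exchange; $(e,f)$ with $e\in T,f\in S$ and $D_H(T,e)\cap C_H(S,e)=\{e,f\}$ is a unique $T$ edge exchange. $\vec\tau_3(H)$: vertex set $V_{\tau(H)}$ of ordered pairs $(S,T)$ of disjoint spanning trees covering all edges; an arc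 $(e,f,S,T)$ from $(S,T)$ to $(S-e+f,T+e-f)$ for each unique $S$ edge exchange and to $(S+e-f,T-e+f)$ for each unique $T$ edge exchange; $(e,f,P)$ with $P=(S,T)$ denotes $(e,f,S,T)$. The edge $e_w$ joins $v$ and $w$. The reduction graph $G_{a,b}$ has vertex set $V-v$ and edge set $E-e_x-e_y-e_z+e_{a,b}$, $e_{a,b}$ a new edge with ends $a,b$. $\rho_{e_{a,b},c}(S,T)=(S-e_{a,b}+e_a+e_b,T+e_c)$ if $e_{a,b}\in S$ and $=(S+e_c,T-e_{a,b}+e_a+e_b)$ if $e_{a,b}\in T$. *)

(* Defs.v *)
(* Multigraphs are represented inside ambient finite types:
   vertices of type V, edges of type E, and a global endpoint map
   ep : E -> V * V.  A graph is a pair (W : {set V}, F : {set E}). *)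
From mathcomp Require Import all_boot.
Set Implicit Arguments. Unset Strict Implicit. Unset Printing Implicit Defensive.

Section Graphs.
Variables (V E : finType) (ep : E -> V * V).

Definition joins (e : E) (u w : V) : bool :=
  (ep e == (u, w)) || (ep e == (w, u)).

Definition adj (F : {set E}) : rel V :=
  fun u w => [exists f in F, joins f u w].

Definition conn (F : {set E}) (u w : V) : bool := connect (adj F) u w.

Definition graph_wf (W : {set V}) (F : {set E}) : Prop :=
  forall e, e \in F -> [/\ (ep e).1 \in W, (ep e).2 \in W & (ep e).1 != (ep e).2].

Definition connected (W : {set V}) (F : {set E}) : Prop :=
  forall u w, u \in W -> w \in W -> conn F u w.

Definition acyclic (F : {set E}) : Prop :=
  forall e, e \in F -> ~~ conn (F :\ e) (ep e).1 (ep e).2.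

Definition spanning_tree (W : {set V}) (EH T : {set E}) : Prop :=
  [/\ T \subset EH, connected W T & acyclic T].

(* C_H(T,e) for e \notin T: e together with the edges of the unique T-path
   between the ends of e (f in T is on that path iff removing f separates
   the ends of e in T) *)
Definition Fcycle (T : {set E}) (e : E) : {set E} :=
  e |: [set f in T | ~~ conn (T :\ f) (ep e).1 (ep e).2].

Definition Dcut (EH T : {set E}) (e : E) : {set E} :=
  [set f in EH | ~~ conn (T :\ e) (ep f).1 (ep f).2].

Definition Vtau (W : {set V}) (EH : {set E}) (P : {set E} * {set E}) : Prop :=
  [/\ spanning_tree W EH P.1, spanning_tree W EH P.2,
      [disjoint P.1 & P.2] & P.1 :|: P.2 = EH].

Definition uniqS (EH : {set E}) (P : {set E} * {set E}) (e f : E) : Prop :=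
  [/\ e \in P.1, f \in P.2 & Dcut EH P.1 e :&: Fcycle P.2 e = [set e; f]].

Definition uniqT (EH : {set E}) (P : {set E} * {set E}) (e f : E) : Prop :=
  [/\ e \in P.2, f \in P.1 & Dcut EH P.2 e :&: Fcycle P.1 e = [set e; f]].

Definition is_arc (W : {set V}) (EH : {set E}) (e f : E)
    (P : {set E} * {set E}) : Prop :=
  Vtau W EH P /\ (uniqS EH P e f \/ uniqT EH P e f).

Definition arc_head (e f : E) (P : {set E} * {set E}) : {set E} * {set E} :=
  if e \in P.1 then (f |: (P.1 :\ e), e |: (P.2 :\ f))
  else (e |: (P.1 :\ f), f |: (P.2 :\ e)).

Definition bispanning (W : {set V}) (F : {set E}) : Prop :=
  exists P, Vtau W F P.

Definition subgraph (W : {set V}) (F : {set E}) (VG : {set V}) (EG : {set E}) : Prop :=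
  [/\ W \subset VG, F \subset EG &
      forall e, e \in F -> (ep e).1 \in W /\ (ep e).2 \in W].

Definition atomic (VG : {set V}) (EG : {set E}) : Prop :=
  forall W F, W != set0 -> subgraph W F VG EG -> bispanning W F ->
    (W = VG /\ F = EG) \/ (exists u, W = [set u] /\ F = set0).

Definition rho (eab ea eb ec : E) (P : {set E} * {set E}) : {set E} * {set E} :=
  if eab \in P.1 then (ea |: (eb |: (P.1 :\ eab)), ec |: P.2)
  else (ec |: P.1, ea |: (eb |: (P.2 :\ eab))).

End Graphs.

(* Main.v *)
Require Import Defs.
From mathcomp Require Import all_boot.
Set Implicit Arguments. Unset Strict Implicit. Unset Printing Implicit Defensive.

Section Lemmas.
Variables (V E : finType) (ep : E -> V * V).

Local Notation conn := (conn ep).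
Local Notation joins := (joins ep).
Implicit Types (F Y X A B : {set E}) (x y z u w : V) (W : {set V}) (e f g h : E).

Lemma adjC F : symmetric (adj ep F).
Proof.
move=> x y; apply/idP/idP => /existsP [e /andP [He Hj]]; apply/existsP; exists e;
  by rewrite He /joins orbC.
Qed.

Lemma connC F x y : conn F x y = conn F y x.
Proof. exact: (sym_connect_sym (adjC F)). Qed.

Lemma conn_trans F x y z : conn F x y -> conn F y z -> conn F x z.
Proof. exact: connect_trans. Qed.

Lemma conn0 F x : conn F x x.
Proof. exact: connect0. Qed.

Lemma conn_edge F e x y : e \in F -> joins e x y -> conn F x y.
Proof. by move=> He Hj; apply: connect1; apply/existsP; exists e; rewrite He. Qed.

Lemma joins_ends e : joins e (ep e).1 (ep e).2.
Proof. by rewrite /joins; case: (ep e) => ? ? /=; rewrite eqxx. Qed.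

Lemma joins_conn F e x y : joins e x y -> conn F (ep e).1 (ep e).2 = conn F x y.
Proof. by case/orP => /eqP ->; rewrite // connC. Qed.

Lemma conn_map (g : V -> V) F F' :
  (forall e, e \in F -> conn F' (g (ep e).1) (g (ep e).2)) ->
  forall x y, conn F x y -> conn F' (g x) (g y).
Proof.
move=> H x y /connectP [p]; elim: p x => [|z p IH] x /=; first by move=> _ ->; exact: conn0.
case/andP => /existsP [e /andP [He Hj]] Hp Hy.
apply: (@conn_trans _ _ (g z)); last exact: IH.
by case/orP: Hj => /eqP Hj; have := H e He; rewrite Hj //= connC.
Qed.

Lemma conn_sub F F' x y : F \subset F' -> conn F x y -> conn F' x y.
Proof.
move=> /subsetP Hs; apply: (@conn_map id) => e He.
exact: (conn_edge (Hs _ He) (joins_ends e)).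
Qed.

Lemma conn_split F h x w : conn F x w ->
  [\/ conn (F :\ h) x w,
      conn (F :\ h) x (ep h).1 /\ conn (F :\ h) (ep h).2 w |
      conn (F :\ h) x (ep h).2 /\ conn (F :\ h) (ep h).1 w].
Proof.
move=> /connectP [p]; elim: p x => [|z p IH] x /=; first by move=> _ ->; constructor 1; exact: conn0.
case/andP => /existsP [e /andP [He Hj]] Hp Hy.
have := IH z Hp Hy.
have [Eeh|Neh] := eqVneq e h.
  subst e; case/orP: Hj => /eqP Eh; rewrite Eh /=.
  - case=> [H1|[H1 H2]|[H1 H2]].
    + by constructor 2; split => //; exact: conn0.
    + by constructor 2; split => //; exact: conn0.
    + by constructor 1.
  - case=> [H1|[H1 H2]|[H1 H2]].
    + by constructor 3; split => //; exact: conn0.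
    + by constructor 1.
    + by constructor 3; split => //; exact: conn0.
have Hxz : conn (F :\ h) x z by apply: (conn_edge (e := e)); rewrite // !inE Neh.
case=> [H1|[H1 H2]|[H1 H2]].
- by constructor 1; exact: conn_trans H1.
- by constructor 2; split => //; exact: conn_trans H1.
- by constructor 3; split => //; exact: conn_trans H1.
Qed.

Lemma conn_isolated F x y : (forall e, e \in F -> ((ep e).1 != x) && ((ep e).2 != x)) ->
  conn F x y -> x = y.
Proof.
move=> H /connectP [[|z p]] /=; first by move=> _ ->.
case/andP => /existsP [e /andP [He Hj]] _ _.
by have := H e He; case/orP: Hj => /eqP ->; rewrite eqxx ?andbF.
Qed.

Lemma subD1U1 Y g : (g |: Y) :\ g \subset Y.
Proof. by apply/subsetP => x; rewrite !inE; case/andP => /negPf ->. Qed.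

Lemma sub_U1 Y g : Y \subset g |: Y.
Proof. by apply/subsetP => x; rewrite !inE => ->; rewrite orbT. Qed.

Lemma swap_conn Y g h : ~~ conn Y (ep h).1 (ep h).2 ->
  conn (g |: Y) (ep h).1 (ep h).2 -> conn (h |: Y) (ep g).1 (ep g).2.
Proof.
have Hh : conn (h |: Y) (ep h).1 (ep h).2 by apply: (conn_edge (e := h)); rewrite ?setU11 ?joins_ends.
move=> Nh /(conn_split g) [H|[H1 H2]|[H1 H2]].
- by case/negP: Nh; apply: conn_sub H; exact: subD1U1.
- have K1 := conn_sub (subD1U1 Y g) H1; have K2 := conn_sub (subD1U1 Y g) H2.
  have {}K1 := conn_sub (sub_U1 Y h) K1; have {}K2 := conn_sub (sub_U1 Y h) K2.
  rewrite connC in K1; rewrite connC in K2.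
  exact: conn_trans K1 (conn_trans Hh K2).
- have K1 := conn_sub (subD1U1 Y g) H1; have K2 := conn_sub (subD1U1 Y g) H2.
  have {}K1 := conn_sub (sub_U1 Y h) K1; have {}K2 := conn_sub (sub_U1 Y h) K2.
  rewrite connC in Hh.
  exact: conn_trans K2 (conn_trans Hh K1).
Qed.

Lemma two_comp W X g w : connected ep W X -> (ep g).1 \in W -> w \in W ->
  conn (X :\ g) (ep g).1 w || conn (X :\ g) (ep g).2 w.
Proof.
move=> HXc Hg1 Hw; have := conn_split g (HXc _ _ Hg1 Hw).
by case=> [->|[_ ->]|[_ ->]]; rewrite ?orbT.
Qed.

Lemma tree_exchange W F X g h :
  (forall e, e \in F -> ((ep e).1 \in W) && ((ep e).2 \in W)) ->
  spanning_tree ep W F X -> g \in X -> h \in F -> h \notin X ->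
  ~~ conn (X :\ g) (ep h).1 (ep h).2 -> spanning_tree ep W F (h |: (X :\ g)).
Proof.
move=> HW [HXF HXc HXa] Hg Hh HhX Nh.
set X' := h |: (X :\ g).
have Hsub : X :\ g \subset X' by apply: sub_U1.
have Hg1 : (ep g).1 \in W by case/andP: (HW g (subsetP HXF g Hg)).
have Hgg : conn X' (ep g).1 (ep g).2.
  case/andP: (HW h Hh) => Hh1 Hh2.
  have C1 := two_comp HXc Hg1 Hh1; have C2 := two_comp HXc Hg1 Hh2.
  have Hhh : conn X' (ep h).1 (ep h).2 := conn_edge (setU11 _ _) (joins_ends h).
  case/orP: C1 => C1; case/orP: C2 => C2.
  - by case/negP: Nh; rewrite connC in C1; exact: conn_trans C1 C2.
  - have K1 := conn_sub Hsub C1; have K2 := conn_sub Hsub C2.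
    rewrite connC in K2; exact: conn_trans K1 (conn_trans Hhh K2).
  - have K1 := conn_sub Hsub C1; have K2 := conn_sub Hsub C2.
    rewrite connC in K1; rewrite connC in Hhh; exact: conn_trans K2 (conn_trans Hhh K1).
  - by case/negP: Nh; rewrite connC in C1; exact: conn_trans C1 C2.
split.
- apply/subsetP => x; rewrite !inE; case/orP => [/eqP -> //| /andP [_ Hx]]; exact: (subsetP HXF _ Hx).
- move=> u w Hu Hw; apply: (@conn_map id X) (HXc _ _ Hu Hw) => e He.
  case: (eqVneq e g) => [->|Neg] //=.
  by apply: (conn_edge (e := e)) (joins_ends e); rewrite !inE Neg He orbT.
- move=> e; rewrite !inE; case/orP => [/eqP ->|/andP [Neg He]].
  + apply: contra Nh; apply: conn_sub; apply/subsetP => x; rewrite !inE.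
    by case/andP => /negPf -> /=.
  + case: (eqVneq e h) => [Eeh|Neh]; first by move: HhX; rewrite -Eeh He.
    have Y1 : X' :\ e :\ h \subset X :\ e.
      by apply/subsetP => x; rewrite !inE; case/andP => /negPf -> /= /andP [-> /andP [_ ->]].
    have Y2 : X' :\ e :\ h \subset X :\ g.
      by apply/subsetP => x; rewrite !inE; case/andP => /negPf -> /= /andP [_ /andP [-> ->]].
    have He' : conn (X :\ g) (ep e).1 (ep e).2.
      by apply: (conn_edge (e := e)) (joins_ends e); rewrite !inE Neg He.
    apply/negP => /(conn_split h) [H|[H1 H2]|[H1 H2]].
    * by case/negP: (HXa e He); exact: conn_sub Y1 H.
    * case/negP: Nh; have K1 := conn_sub Y2 H1; have K2 := conn_sub Y2 H2.
      rewrite connC in K1; rewrite connC in K2; exact: conn_trans K1 (conn_trans He' K2).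
    * case/negP: Nh; have K1 := conn_sub Y2 H1; have K2 := conn_sub Y2 H2.
      rewrite connC in He'; exact: conn_trans K2 (conn_trans He' K1).
Qed.

Lemma Fcycle_exchange A e f : acyclic ep A -> e \in A -> f \notin A ->
  ~~ conn (A :\ e) (ep f).1 (ep f).2 ->
  Fcycle ep (f |: (A :\ e)) e = Fcycle ep A f.
Proof.
move=> HA He Hf Hn; apply/setP => x; rewrite /Fcycle !inE.
case: (eqVneq x e) => [->|Nxe] /=; first by rewrite He Hn orbT.
case: (eqVneq x f) => [->|Nxf] /=.
  have := HA e He; apply: contra; apply: conn_sub.
  by apply/subsetP => y; rewrite !inE; case/andP => /negPf -> /=.
case Hx: (x \in A) => //=; congr negb.
set Y := A :\ e :\ x.
have NYf : ~~ conn Y (ep f).1 (ep f).2.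
  apply: contra Hn; apply: conn_sub; apply/subsetP => y; rewrite !inE.
  by case/andP => _ /andP [-> ->].
have NYe : ~~ conn Y (ep e).1 (ep e).2.
  apply: contra (HA e He); apply: conn_sub; apply/subsetP => y; rewrite !inE.
  by case/andP => _ /andP [-> ->].
apply/idP/idP => H.
- have H1 : conn (f |: Y) (ep e).1 (ep e).2.
    apply: conn_sub H; apply/subsetP => y; rewrite !inE.
    by case/andP => -> /orP [->|/andP [-> ->]]; rewrite ?orbT.
  have := swap_conn NYe H1; apply: conn_sub; apply/subsetP => y; rewrite !inE.
  case/orP => [/eqP ->|/andP [-> /andP [_ ->]]] //.
  by rewrite He eq_sym Nxe.
- have H1 : conn (e |: Y) (ep f).1 (ep f).2.
    apply: conn_sub H; apply/subsetP => y; rewrite !inE.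
    by case/andP => -> ->; rewrite andbT; case: (y == e).
  have := swap_conn NYf H1; apply: conn_sub; apply/subsetP => y; rewrite !inE.
  case/orP => [/eqP ->|/andP [-> /andP [-> ->]]]; rewrite ?eqxx ?orbT //.
  by rewrite eq_sym Nxf.
Qed.

Lemma arc_exchange W F A B e f :
  (forall e, e \in F -> ((ep e).1 \in W) && ((ep e).2 \in W)) ->
  Vtau ep W F (A, B) -> e \in A -> f \in B ->
  Dcut ep F B f :&: Fcycle ep A f = [set f; e] ->
  Vtau ep W F (f |: (A :\ e), e |: (B :\ f)) /\
  Dcut ep F (e |: (B :\ f)) e :&: Fcycle ep (f |: (A :\ e)) e = [set e; f].
Proof.
move=> HW [/= TA TB HD HU] He Hf H.
have HeI : e \in Dcut ep F B f :&: Fcycle ep A f by rewrite H !inE eqxx orbT.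
have HfB : f \notin A by rewrite disjoint_sym in HD; rewrite (disjointFr HD Hf).
have HeB : e \notin B by rewrite (disjointFr HD).
have Nef : e != f by apply: contraNneq HfB => <-.
have : (e \in F) && ~~ conn (B :\ f) (ep e).1 (ep e).2 && ~~ conn (A :\ e) (ep f).1 (ep f).2.
  by move: HeI; rewrite /Dcut /Fcycle !inE (negPf Nef) He.
case/andP => /andP [HeF NB] NA.
have HfF : f \in F by rewrite -HU !inE Hf orbT.
split; first split => /=.
- exact: tree_exchange.
- exact: tree_exchange.
- rewrite -setI_eq0; apply/eqP/setP => x; rewrite !inE.
  case: (eqVneq x f) => [->|Nxf] /=; first by rewrite eq_sym (negPf Nef).
  case: (eqVneq x e) => [->|Nxe] /=; first by [].
  by case Hx: (x \in A) => //=; rewrite (disjointFr HD Hx).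
- apply/setP => x; rewrite -HU !inE.
  case: (eqVneq x f) => [->|Nxf] /=; first by rewrite Hf !orbT.
  case: (eqVneq x e) => [->|Nxe] /=; first by rewrite He.
  by [].
- have Heq : (e |: B :\ f) :\ e = B :\ f.
    apply/setP => x; rewrite !inE; case: (eqVneq x e) => [->|] //=.
    by rewrite (negPf HeB) andbF.
  have -> : Dcut ep F (e |: B :\ f) e = Dcut ep F B f by rewrite /Dcut Heq.
  rewrite Fcycle_exchange //; last by case: TA.
  by rewrite H setUC.
Qed.

End Lemmas.

Section Core.
Variables (V E : finType) (ep : E -> V * V) (VG : {set V}) (EG : {set E})
  (v a b c : V) (ea eb ec eab : E).
Hypotheses (Hwf : graph_wf ep VG EG) (Hab : a != b) (Hac : a != c) (Hbc : b != c)
  (Hab' : ea != eb) (Hac' : ea != ec) (Hbc' : eb != ec)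
  (Hja : joins ep ea v a) (Hjb : joins ep eb v b) (Hjc : joins ep ec v c)
  (Hinc : [set e in EG | ((ep e).1 == v) || ((ep e).2 == v)] = [set ea; eb; ec])
  (HeabG : eab \notin EG) (Hjab : joins ep eab a b).

Local Notation conn := (conn ep).
Local Notation W' := (VG :\ v).
Local Notation EH := (eab |: (EG :\: [set ea; eb; ec])).
Implicit Types (F Y X Z : {set E}) (x y u w t : V) (e f : E).

Definition gm t u := if u == v then t else u.

Lemma gm_v t : gm t v = t. Proof. by rewrite /gm eqxx. Qed.
Lemma gm_id t u : u != v -> gm t u = u. Proof. by rewrite /gm => /negPf ->. Qed.

Lemma inc_in e : e \in [set ea; eb; ec] -> e \in EG.
Proof. by rewrite -Hinc inE => /andP []. Qed.

Lemma HeaG : ea \in EG. Proof. by apply: inc_in; rewrite !inE eqxx. Qed.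
Lemma HebG : eb \in EG. Proof. by apply: inc_in; rewrite !inE eqxx orbT. Qed.
Lemma HecG : ec \in EG. Proof. by apply: inc_in; rewrite !inE eqxx !orbT. Qed.

Lemma joins_wf e x y : e \in EG -> joins ep e x y -> [/\ x \in VG, y \in VG & x != y].
Proof.
move=> He; case: (Hwf He) => H1 H2 H3; case/orP => /eqP E1; rewrite E1 /= in H1 H2 H3.
  by [].
by rewrite eq_sym.
Qed.

Lemma nbr_facts : [/\ a \in W', b \in W' & c \in W'].
Proof.
case: (joins_wf HeaG Hja) => _ Ha Hva; case: (joins_wf HebG Hjb) => _ Hb Hvb;
case: (joins_wf HecG Hjc) => _ Hc Hvc.
by rewrite !inE Ha Hb Hc ![_ == v]eq_sym Hva Hvb Hvc.
Qed.

Lemma av : a != v. Proof. by case: nbr_facts => H _ _; move: H; rewrite !inE => /andP []. Qed.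
Lemma bv : b != v. Proof. by case: nbr_facts => _ H _; move: H; rewrite !inE => /andP []. Qed.
Lemma cv : c != v. Proof. by case: nbr_facts => _ _ H; move: H; rewrite !inE => /andP []. Qed.

Lemma EG_nv e : e \in EG -> e \notin [set ea; eb; ec] -> ((ep e).1 != v) && ((ep e).2 != v).
Proof. by move=> He; rewrite -Hinc inE He /= negb_or. Qed.

Lemma inEH e : (e \in EH) = (e == eab) || [&& e != ea, e != eb, e != ec & e \in EG].
Proof. by rewrite !inE !negb_or -!andbA. Qed.

Lemma EH_nv e : e \in EH -> ((ep e).1 != v) && ((ep e).2 != v).
Proof.
rewrite inEH => /orP [/eqP ->|/and4P [H1 H2 H3 H4]]; last first.
  by apply: EG_nv => //; rewrite !inE !negb_or H1 H2 H3.
by case/orP: Hjab => /eqP ->; rewrite /= av bv.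
Qed.

Lemma nEH_a : ea \notin EH.
Proof. by rewrite inEH !eqxx /= ?andbF ?orbF; apply/eqP => E1; move: HeabG; rewrite -E1 HeaG. Qed.
Lemma nEH_b : eb \notin EH.
Proof. by rewrite inEH !eqxx /= ?andbF ?orbF; apply/eqP => E1; move: HeabG; rewrite -E1 HebG. Qed.
Lemma nEH_c : ec \notin EH.
Proof. by rewrite inEH !eqxx /= ?andbF ?orbF; apply/eqP => E1; move: HeabG; rewrite -E1 HecG. Qed.

Lemma collapse e t Z : joins ep e v t -> t != v -> Z \subset EH ->
  forall u w, conn (e |: Z) u w -> conn Z (gm t u) (gm t w).
Proof.
move=> Hj Ht HZ; apply: conn_map => e'; rewrite in_setU1 => /orP [/eqP ->|He'].
  by case/orP: Hj => /eqP ->; rewrite /= gm_v gm_id //; exact: conn0.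
case/andP: (EH_nv (subsetP HZ _ He')) => H1 H2.
by rewrite !gm_id //; apply: (conn_edge (e := e')) (joins_ends _ e').
Qed.

Lemma joinsC e x y : joins ep e x y = joins ep e y x.
Proof. by rewrite /joins orbC. Qed.

Local Notation Z0 Z := (ea |: (eb |: (Z :\ eab))).

Lemma Z0_ab Z : conn (Z0 Z) a b.
Proof.
apply: (conn_trans (y := v)).
  by apply: (conn_edge (e := ea)); rewrite ?setU11 // joinsC.
by apply: (conn_edge (e := eb)); rewrite // !inE eqxx orbT.
Qed.

Lemma lift_ab Z u w : conn Z u w -> conn (Z0 Z) u w.
Proof.
apply: (conn_map (g := id)) => e He /=.
case: (eqVneq e eab) => [->|Ne]; first by rewrite (joins_conn _ Hjab) Z0_ab.
by apply: (conn_edge (e := e)) (joins_ends _ e); rewrite !inE Ne He !orbT.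
Qed.

Lemma proj_a Z : Z \subset EH -> eab \in Z ->
  forall u w, conn (Z0 Z) u w -> conn Z (gm a u) (gm a w).
Proof.
move=> HZ HeZ; apply: conn_map => e; rewrite !inE => /orP [/eqP ->|/orP [/eqP ->|/andP [Ne He]]].
- by case/orP: Hja => /eqP ->; rewrite /= gm_v gm_id ?av //; exact: conn0.
- have Hab0 : conn Z a b by rewrite -(joins_conn _ Hjab); exact: conn_edge HeZ (joins_ends _ eab).
  by case/orP: Hjb => /eqP ->; rewrite /= gm_v gm_id ?bv // connC.
- case/andP: (EH_nv (subsetP HZ _ He)) => H1 H2.
  by rewrite !gm_id //; apply: (conn_edge (e := e)) (joins_ends _ e).
Qed.

Lemma EH_EG e : e \in EH -> e != eab -> e \in EG.
Proof. by rewrite inEH => /orP [->//|/and4P [_ _ _ ->]]. Qed.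

Lemma Y0_tree Y : spanning_tree ep W' EH Y -> eab \notin Y -> spanning_tree ep VG EG (ec |: Y).
Proof.
move=> [HYs HYc HYa] HeY.
have HYE : Y \subset EH := HYs.
split.
- apply/subsetP => x; rewrite in_setU1 => /orP [/eqP ->|Hx]; first exact: HecG.
  by apply: EH_EG; [exact: (subsetP HYs) | apply: contraNneq HeY => <-].
- have K : forall u, u \in VG -> conn (ec |: Y) u c.
    move=> u Hu; case: (eqVneq u v) => [->|Nu].
      by apply: (conn_edge (e := ec)); rewrite ?setU11.
    apply: conn_sub (sub_U1 _ _) _; apply: HYc; first by rewrite !inE Nu.
    by case: nbr_facts.
  by move=> u w Hu Hw; apply: conn_trans (K u Hu) _; rewrite connC; exact: K.
- move=> e; rewrite in_setU1 => /orP [/eqP ->|He].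
  + apply/negP; rewrite (joins_conn _ Hjc) => /(conn_sub (subD1U1 _ _)) H.
    have Hvc : v = c.
      by apply: (conn_isolated _ H) => e' He'; case/andP: (EH_nv (subsetP HYs _ He')) => -> ->.
    by move: cv; rewrite Hvc eqxx.
  + apply/negP => H.
    have H1 : conn (ec |: (Y :\ e)) (ep e).1 (ep e).2.
      apply: conn_sub H; apply/subsetP => x; rewrite !inE.
      by case/andP => -> /orP [->|->]; rewrite ?orbT.
    have HsZ : Y :\ e \subset EH.
      by apply/subsetP => x; rewrite in_setD1 => /andP [_ Hx]; exact: (subsetP HYs).
    have := collapse Hjc cv HsZ H1; case/andP: (EH_nv (subsetP HYs _ He)) => N1 N2.
    rewrite !gm_id //; apply/negP; exact: HYa.
Qed.

Lemma subD1_EH X e : X \subset EH -> X :\ e \subset EH.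
Proof. by move=> HX; apply/subsetP => x; rewrite in_setD1 => /andP [_ Hx]; exact: (subsetP HX). Qed.

Lemma X0_tree X : spanning_tree ep W' EH X -> eab \in X -> spanning_tree ep VG EG (Z0 X).
Proof.
move=> [HXs HXc HXa] HeX.
have HXab := HXa eab HeX; rewrite (joins_conn _ Hjab) in HXab.
split.
- apply/subsetP => x; rewrite !in_setU1 in_setD1 => /orP [/eqP ->|/orP [/eqP ->|/andP [N Hx]]].
  + exact: HeaG.
  + exact: HebG.
  + by apply: EH_EG => //; exact: (subsetP HXs).
- have K : forall u, u \in VG -> conn (Z0 X) u a.
    move=> u Hu; case: (eqVneq u v) => [->|Nu].
      by apply: (conn_edge (e := ea)); rewrite ?setU11.
    apply: lift_ab; apply: HXc; first by rewrite !inE Nu.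
    by case: nbr_facts.
  by move=> u w Hu Hw; apply: conn_trans (K u Hu) _; rewrite connC; exact: K.
- move=> e; rewrite !in_setU1 in_setD1 => /orP [/eqP ->|/orP [/eqP ->|/andP [N He]]].
  + apply/negP; rewrite (joins_conn _ Hja) => H.
    have H1 : conn (eb |: (X :\ eab)) v a.
      apply: conn_sub H; apply/subsetP => x; rewrite !inE.
      by case/andP => /negPf -> /=.
    have := collapse Hjb bv (subD1_EH eab HXs) H1; rewrite gm_v gm_id ?av // connC.
    by apply/negP.
  + apply/negP; rewrite (joins_conn _ Hjb) => H.
    have H1 : conn (ea |: (X :\ eab)) v b.
      apply: conn_sub H; apply/subsetP => x; rewrite !inE.
      case/andP => Nx /orP [->//|/orP [/eqP Ex|->]]; rewrite ?orbT //.
      by move: Nx; rewrite Ex eqxx.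
    have := collapse Hja av (subD1_EH eab HXs) H1; rewrite gm_v gm_id ?bv //.
    by apply/negP.
  + apply/negP => H.
    have H1 : conn (Z0 (X :\ e)) (ep e).1 (ep e).2.
      apply: conn_sub H; apply/subsetP => x; rewrite !inE.
      by case/andP => -> /orP [->|/orP [->|/andP [-> ->]]]; rewrite ?orbT.
    have HeX' : eab \in X :\ e by rewrite !inE eq_sym N HeX.
    have := proj_a (subD1_EH e HXs) HeX' H1; case/andP: (EH_nv (subsetP HXs _ He)) => N1 N2.
    by rewrite !gm_id //; apply/negP; exact: HXa.
Qed.

Lemma core X Y f :
  spanning_tree ep W' EH X -> spanning_tree ep W' EH Y -> [disjoint X & Y] ->
  X :|: Y = EH -> eab \in X -> f \in Y ->
  Dcut ep EH Y f :&: Fcycle ep X f = [set f; eab] ->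
  exists e2, (e2 = ea \/ e2 = eb) /\ Vtau ep VG EG (Z0 X, ec |: Y) /\
    e2 \in Z0 X /\ Dcut ep EG (ec |: Y) f :&: Fcycle ep (Z0 X) f = [set f; e2].
Proof.
move=> TX TY HD HU HeX HfY H.
have HeY : eab \notin Y by rewrite (disjointFr HD HeX).
have Hfe : f != eab by apply: contraNneq HeY => <-.
have HfEH : f \in EH by rewrite -HU in_setU HfY orbT.
have HfG : f \in EG := EH_EG HfEH Hfe.
have Hfc : f != ec by apply/eqP => E1; move: nEH_c; rewrite -{1}E1 HfEH.
case/andP: (EH_nv HfEH) => Hf1v Hf2v.
have HfW : (ep f).1 \in W' by case: (Hwf HfG) => H1 _ _; rewrite !inE Hf1v.
have HI : forall e, ((e \in EH) && ~~ conn (Y :\ f) (ep e).1 (ep e).2) &&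
    ((e == f) || ((e \in X) && ~~ conn (X :\ e) (ep f).1 (ep f).2)) = (e == f) || (e == eab).
  move=> e; have := f_equal (fun S : {set E} => e \in S) H; rewrite /Dcut /Fcycle !inE /=.
  by [].
have Hf1 : ~~ conn (Y :\ f) (ep f).1 (ep f).2 by have := HI f; rewrite eqxx HfEH /= => /andP [].
have Hab1 : ~~ conn (Y :\ f) a b.
  by have := HI eab; rewrite eqxx orbT setU11 (joins_conn _ Hjab) /= => /andP [].
have Hab2 : ~~ conn (X :\ eab) (ep f).1 (ep f).2.
  by have := HI eab; rewrite eqxx orbT eq_sym (negPf Hfe) HeX /= => /andP [_ ->].
have Y0c : forall u w, conn ((ec |: Y) :\ f) u w = conn (Y :\ f) (gm c u) (gm c w).
  have HsZ : Y :\ f \subset EH by case: TY => HYs _ _; exact: subD1_EH.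
  have K : forall u, conn ((ec |: Y) :\ f) u (gm c u).
    move=> u; case: (eqVneq u v) => [->|Nu]; last by rewrite gm_id //; exact: conn0.
    by rewrite gm_v; apply: (conn_edge (e := ec)); rewrite // !inE eqxx eq_sym Hfc.
  move=> u w; apply/idP/idP => Hc.
  - apply: collapse Hjc cv HsZ _ _ _; apply: conn_sub Hc; apply/subsetP => x; rewrite !inE.
    by case/andP => -> /orP [->|->]; rewrite ?orbT.
  - apply: conn_trans (K u) _; rewrite connC; apply: conn_trans (K w) _; rewrite connC.
    apply: conn_sub Hc; apply/subsetP => x; rewrite !inE.
    by case/andP => -> ->; rewrite orbT.
have X0c : forall x : E, x \in X -> x != eab ->
    conn (Z0 X :\ x) (ep f).1 (ep f).2 = conn (X :\ x) (ep f).1 (ep f).2.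
  move=> x Hx Nx.
  have HxEH : x \in EH by rewrite -HU in_setU Hx.
  have Nxa : x != ea by apply/eqP => E1; move: nEH_a; rewrite -{1}E1 HxEH.
  have Nxb : x != eb by apply/eqP => E1; move: nEH_b; rewrite -{1}E1 HxEH.
  have HsZ : X :\ x \subset EH by case: TX => HXs _ _; exact: subD1_EH.
  have HeX' : eab \in X :\ x by rewrite !inE eq_sym Nx HeX.
  apply/idP/idP => Hc.
  - have := proj_a HsZ HeX' (u := (ep f).1) (w := (ep f).2); rewrite !gm_id //; apply.
    apply: conn_sub Hc; apply/subsetP => y; rewrite !inE.
    by case/andP => -> /orP [->|/orP [->|/andP [-> ->]]]; rewrite ?orbT.
  - have := lift_ab Hc; apply: conn_sub; apply/subsetP => y; rewrite !inE.
    case/orP => [/eqP ->|/orP [/eqP ->|/andP [-> /andP [-> ->]]]]; rewrite ?eqxx ?orbT ?andbT //.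
    + by rewrite eq_sym.
    + by rewrite eq_sym.
have Fa : ~~ conn (Z0 X :\ ea) (ep f).1 (ep f).2.
  apply: contra Hab2 => Hc.
  have H1 : conn (eb |: (X :\ eab)) (ep f).1 (ep f).2.
    apply: conn_sub Hc; apply/subsetP => x; rewrite !inE.
    by case/andP => /negPf -> /=.
  by have := collapse Hjb bv (subD1_EH eab (let: And3 h _ _ := TX in h)) H1; rewrite !gm_id.
have Fb : ~~ conn (Z0 X :\ eb) (ep f).1 (ep f).2.
  apply: contra Hab2 => Hc.
  have H1 : conn (ea |: (X :\ eab)) (ep f).1 (ep f).2.
    apply: conn_sub Hc; apply/subsetP => x; rewrite !inE.
    case/andP => Nx /orP [->//|/orP [/eqP Ex|->]]; rewrite ?orbT //.
    by move: Nx; rewrite Ex eqxx.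
  by have := collapse Hja av (subD1_EH eab (let: And3 h _ _ := TX in h)) H1; rewrite !gm_id.
have Hcomp : conn (Y :\ f) c a = ~~ conn (Y :\ f) c b.
  case: TY => _ HYc _.
  case: nbr_facts => aW bW cW.
  have Ka := two_comp HYc HfW aW; have Kb := two_comp HYc HfW bW; have Kc := two_comp HYc HfW cW.
  apply/idP/idP => Hc.
  - apply/negP => Hcb; case/negP: Hab1; rewrite connC in Hc; exact: conn_trans Hc Hcb.
  - case/orP: Ka => Ka; case/orP: Kb => Kb; case/orP: Kc => Kc;
    first [ by rewrite connC in Kc; exact: conn_trans Kc Ka
          | by case/negP: Hc; rewrite connC in Kc; exact: conn_trans Kc Kb
          | by case/negP: Hab1; rewrite connC in Ka; exact: conn_trans Ka Kb ].
have naY : ea \notin Y by apply: contra nEH_a; case: TY => HYs _ _; exact: (subsetP HYs).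
have nbY : eb \notin Y by apply: contra nEH_b; case: TY => HYs _ _; exact: (subsetP HYs).
have ncX : ec \notin X by apply: contra nEH_c; case: TX => HXs _ _; exact: (subsetP HXs).
exists (if conn (Y :\ f) c a then eb else ea).
split; first by case: ifP; [right|left].
split.
  split => /=.
  - exact: X0_tree.
  - exact: Y0_tree.
  - rewrite -setI_eq0; apply/eqP/setP => x; rewrite !inE.
    case: (eqVneq x ea) => [->|Na] /=; first by rewrite (negPf Hac') (negPf naY).
    case: (eqVneq x eb) => [->|Nb] /=; first by rewrite (negPf Hbc') (negPf nbY).
    case: (eqVneq x ec) => [->|Nc] /=; first by rewrite (negPf ncX) andbF.
    by case Hx: (x \in X); rewrite ?andbF //= andbT (disjointFr HD Hx) andbF.
  - apply/setP => x; rewrite !inE.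
    case: (eqVneq x ea) => [->|Na] /=; first by rewrite HeaG.
    case: (eqVneq x eb) => [->|Nb] /=; first by rewrite HebG.
    case: (eqVneq x ec) => [->|Nc] /=; first by rewrite HecG orbT.
    case: (eqVneq x eab) => [->|Ne] /=; first by rewrite (negPf HeY) (negPf HeabG).
    have := f_equal (fun S : {set E} => x \in S) HU; rewrite in_setU inEH.
    by rewrite (negPf Ne) Na Nb Nc /=.
split; first by case: ifP; rewrite !inE eqxx ?orbT.
have Naf : ea != f by apply/eqP => E1; move: nEH_a; rewrite {1}E1 HfEH.
have Nbf : eb != f by apply/eqP => E1; move: nEH_b; rewrite {1}E1 HfEH.
apply/setP => x; rewrite /Dcut /Fcycle !inE.
case: (eqVneq x f) => [->|Nxf] /=.
  by rewrite HfG Y0c !gm_id // Hf1.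
case: (eqVneq x ea) => [->|Na] /=.
  rewrite HeaG (joins_conn _ Hja) Y0c gm_v gm_id ?av // Fa /= andbT.
  by case: ifP => _; rewrite ?eqxx // (negPf Hab').
case: (eqVneq x eb) => [->|Nb] /=.
  rewrite HebG (joins_conn _ Hjb) Y0c gm_v gm_id ?bv // Fb /= andbT.
  by rewrite -Hcomp; case: ifP => _; rewrite ?eqxx // eq_sym (negPf Hab').
have Ne2 : (x == (if conn (Y :\ f) c a then eb else ea)) = false.
  by case: ifP => _; apply/negbTE.
rewrite Ne2.
case: (eqVneq x ec) => [->|Nc] /=; first by rewrite (negPf ncX) andbF andFb andbF.
case HxG: (x \in EG) => //=.
have Ne : x != eab by apply/eqP => E1; move: HeabG; rewrite -E1 HxG.
have := HI x; rewrite inEH (negPf Ne) Na Nb Nc HxG (negPf Nxf) /=.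
have : x \notin [set ea; eb; ec] by rewrite !inE !negb_or Na Nb Nc.
move/(EG_nv HxG)/andP => [N1 N2].
rewrite Y0c !gm_id //.
case Hx: (x \in X) => /=; last by rewrite andbF.
by rewrite X0c.
Qed.

End Core.

Lemma Vtau_swap (V E : finType) (ep : E -> V * V) W F A B :
  Vtau ep W F (A, B) -> Vtau ep W F (B, A).
Proof. by case=> /= TA TB HD HU; split => //=; rewrite 1?disjoint_sym 1?setUC. Qed.

Theorem mainTheorem15 (V E : finType) (ep : E -> V * V)
  (VG : {set V}) (EG : {set E}) (v a b c : V) (ea eb ec eab f : E)
  (P : {set E} * {set E}) :
  graph_wf ep VG EG ->
  bispanning ep VG EG ->
  atomic ep VG EG ->
  v \in VG ->
  [/\ a != b, a != c & b != c] ->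
  [/\ ea != eb, ea != ec & eb != ec] ->
  [/\ joins ep ea v a, joins ep eb v b & joins ep ec v c] ->
  [set e in EG | ((ep e).1 == v) || ((ep e).2 == v)] = [set ea; eb; ec] ->
  eab \notin EG ->
  joins ep eab a b ->
  is_arc ep (VG :\ v) (eab |: (EG :\: [set ea; eb; ec])) f eab P ->
  exists e2, (e2 = ea \/ e2 = eb) /\
    is_arc ep VG EG f e2 (rho eab ea eb ec P) /\
    is_arc ep VG EG e2 f (arc_head f e2 (rho eab ea eb ec P)).
Proof.
move=> Hwf _ _ Hv [Hab Hac Hbc] [H1 H2 H3] [Ja Jb Jc] Hinc HeabG Jab.
case: P => S T [[/= TS TT HD HU] Harc].
have HW : forall e, e \in EG -> ((ep e).1 \in VG) && ((ep e).2 \in VG).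
  by move=> e He; case: (Hwf e He) => -> -> _.
case: Harc => [[/= HfS HeabT HI]|[/= HfT HeabS HI]].
- rewrite disjoint_sym in HD; rewrite setUC in HU.
  have [e2 [He2 [HV [He2X HI2]]]] :=
    core Hwf H1 H2 H3 Ja Jb Jc Hinc HeabG Jab TT TS HD HU HeabT HfS HI.
  have HfY : f \in ec |: S by rewrite in_setU1 HfS orbT.
  have [HV' HI'] := arc_exchange HW HV He2X HfY HI2.
  exists e2; split => //.
  have HeabS : (eab \in S) = false by rewrite (disjointFr HD HeabT).
  rewrite /rho /= HeabS /arc_head /= HfY.
  split; split.
  + exact: Vtau_swap.
  + by left; split.
  + exact: Vtau_swap.
  + left; split => //=; first by rewrite in_setU1 eqxx.
    by rewrite in_setU1 eqxx.
- have [e2 [He2 [HV [He2X HI2]]]] :=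
    core Hwf H1 H2 H3 Ja Jb Jc Hinc HeabG Jab TS TT HD HU HeabS HfT HI.
  have HfY : f \in ec |: T by rewrite in_setU1 HfT orbT.
  have [HV' HI'] := arc_exchange HW HV He2X HfY HI2.
  exists e2; split => //.
  have HfX : (f \in ea |: (eb |: (S :\ eab))) = false.
    by case: HV => _ _ HD' _; rewrite disjoint_sym in HD'; rewrite (disjointFr HD' HfY).
  rewrite /rho /= HeabS /arc_head /= HfX.
  split; split => //.
  + by right; split.
  + right; split => //=; first by rewrite in_setU1 eqxx.
    by rewrite in_setU1 eqxx.
Qed.
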